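(* Let $Y$ be a locally compact second countable metric space with a continuous action of $G=\mathrm{SL}_d(\mathbb R)$, let $Y'\subset Y$ be a closed $G$-invariant subset, $0<q<p\le1$ and $y\in Y\setminus Y'$. If $x\in\mathrm{Div}(y,Y',p)$, then for every compact $K\subset Y\setminus Y'$ and every $t>1$ there exists $N$ such that for every integer $M>N$, $$\frac1M\#\{l\in[1,M]\cap\mathbb N:\ g_t^lu(x)y\notin K\}\ge q.$$
   Context: $d=m+n$; $a_1,\dots,a_m>0$, $b_1,\dots,b_n>0$ with $\sum a_i=\sum b_j=1$; $g_t=\mathrm{diag}(t^{a_1},\dots,t^{a_m},t^{-b_1},\dots,t^{-b_n})$ for $t>0$ and $u(x)=\begin{pmatrix}I_m&x\\0&I_n\end{pmatrix}$ for $x\in M_{m\times n}(\mathbb R)$. For $Y,Y'$ as in the claim, $y\in Y\setminus Y'$ and $0<p\le1$, $\mathrm{Div}(y,Y',p)$ is the set of $x\in M_{m\times n}(\mathbb R)$ such that for every compact $K\subset Y\setminus Y'$, $\liminf_{T\to\infty}\frac1T\int_0^T\mathbf 1[g_{e^t}u(x)y\in Y\setminus K]\,dt\ge p$. *)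

(* Defs.v *)
From HB Require Import structures.
From mathcomp Require Import all_boot all_order all_algebra.
From mathcomp Require Import all_classical all_reals all_analysis.
Set Implicit Arguments. Unset Strict Implicit. Unset Printing Implicit Defensive.
Import Order.TTheory GRing.Theory Num.Theory.
Import numFieldNormedType.Exports.
Local Open Scope classical_set_scope.
Local Open Scope ring_scope.

Definition gdiag (R : realType) (m n : nat) (a : 'I_m -> R) (b : 'I_n -> R)
  (t : R) : 'M[R]_(m + n) :=
  diag_mx (row_mx (\row_(i < m) (t `^ (a i))) (\row_(j < n) (t `^ (- b j)))).

Definition umat (R : realType) (m n : nat) (x : 'M[R]_(m, n)) : 'M[R]_(m + n) :=
  block_mx 1%:M x 0 1%:M.

Definition SL (R : realType) (d : nat) : set 'M[R]_d := [set g | \det g = 1].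

Definition continuous_SL_action (R : realType) (d : nat) (Y : topologicalType)
  (act : 'M[R]_d -> Y -> Y) : Prop :=
  [/\ forall y, act 1%:M y = y,
      forall g h y, SL g -> SL h -> act (g *m h) y = act g (act h y)
    & {within [set p : 'M[R]_d * Y | SL p.1], continuous (fun p => act p.1 p.2)}].

Definition Div (R : realType) (m n : nat) (a : 'I_m -> R) (b : 'I_n -> R)
  (Y : topologicalType) (act : 'M[R]_(m + n) -> Y -> Y) (Y' : set Y) (y : Y)
  (p : R) : set 'M[R]_(m, n) :=
  [set x | forall K : set Y, compact K -> K `<=` ~` Y' ->
     (p%:E <= limf_einf
        (fun T : R => (T^-1)%:E *
           \int[lebesgue_measure]_(s in [set s : R | (0 <= s <= T)%R])
              (\1_[set s : R | ~ K (act (gdiag a b (expR s) *m umat x) y)] s : R)%:E)%E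
        (pinfty_nbhs R))%E].

(* Main.v *)
Require Import Defs.
From HB Require Import structures.
From mathcomp Require Import all_boot all_order all_algebra.
From mathcomp Require Import all_classical all_reals all_analysis.
From mathcomp Require Import ring lra.
Import Order.TTheory GRing.Theory Num.Theory.
Import numFieldNormedType.Exports.
Local Open Scope classical_set_scope.
Local Open Scope ring_scope.

Section Alg.
Variables (R : realType) (m n : nat) (a : 'I_m -> R) (b : 'I_n -> R).
Hypotheses (hsa : \sum_i a i = 1) (hsb : \sum_j b j = 1).

Definition GG (s : R) := gdiag a b (expR s).
Definition cc (i : 'I_(m + n)) : R := row_mx (\row_i a i) (\row_j - b j) 0 i.

Lemma dvE s i : (row_mx (\row_(i < m) (expR s `^ (a i))) (\row_(j < n) (expR s `^ (- b j)))) 0 i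
   = expR (s * cc i).
Proof.
rewrite /cc; case: (splitP i) => k hk.
  have -> : i = lshift n k by apply: val_inj.
  by rewrite !row_mxEl !mxE expRM.
have -> : i = rshift m k by apply: val_inj.
by rewrite !row_mxEr !mxE expRM.
Qed.

Lemma GG_entry s i j : GG s i j = (i == j)%:R * expR (s * cc i).
Proof. by rewrite /GG /gdiag mxE dvE mulr_natl. Qed.

Lemma GGD s1 s2 : GG (s1 + s2) = GG s1 *m GG s2.
Proof.
apply/matrixP => i j.
rewrite GG_entry [GG s1]/GG /gdiag mul_diag_mx mxE dvE GG_entry.
by rewrite mulrDl expRD mulrCA.
Qed.

Lemma GG0 : GG 0 = 1%:M.
Proof. by apply/matrixP => i j; rewrite GG_entry !mxE mul0r expR0 mulr1. Qed.

Lemma GGX c l : GG c ^+ l = GG (l%:R * c).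
Proof.
elim: l => [|l IH]; first by rewrite expr0 mul0r GG0.
rewrite exprS IH -mulmxE -GGD; congr GG.
by rewrite [in RHS]mulrS mulrDl mul1r.
Qed.

Lemma detGG s : \det (GG s) = 1.
Proof.
rewrite /GG /gdiag det_diag.
under eq_bigr do rewrite dvE.
rewrite -expR_sum big_split_ord /=.
have -> : \sum_(i < m) s * cc (lshift n i) = s.
  by rewrite -mulr_sumr -[RHS]mulr1 -hsa; congr (_ * _); apply: eq_bigr => i _;
    rewrite /cc row_mxEl mxE.
have -> : \sum_(i < n) s * cc (rshift m i) = - s.
  rewrite -mulr_sumr -[RHS]mulrN1 -hsb -sumrN; congr (_ * _); apply: eq_bigr => i _.
  by rewrite /cc row_mxEr mxE.
by rewrite subrr expR0.
Qed.

Lemma gdiagE t : 0 < t -> gdiag a b t = GG (ln t).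
Proof. by move=> t0; rewrite /GG lnK. Qed.

Lemma GG_entry_cont i j : continuous (fun r => GG r i j).
Proof.
have -> : (fun r => GG r i j) = (fun=> (i == j)%:R) \* (expR \o ( *%R^~ (cc i))).
  by apply: funext => r; rewrite GG_entry.
move=> r; apply: continuousM; first exact: cst_continuous.
apply: continuous_comp; last exact: continuous_expR.
have -> : *%R^~ (cc i) = *%R (cc i) by apply: funext => z; rewrite mulrC.
exact: mulrl_continuous.
Qed.

Lemma GG_cont : continuous GG.
Proof.
move=> s A /= HA.
case: HA => P HP sPA.
have H : \forall r \near s, forall i j, P i j (GG r i j).
  apply: (@filter_forall _ _ (fun i r => forall j, P i j (GG r i j)) (nbhs s) (nbhs_filter s)) => i.
  apply: (@filter_forall _ _ (fun j r => P i j (GG r i j)) (nbhs s) (nbhs_filter s)) => j.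
  exact: (GG_entry_cont i j s) (HP i j).
move: H; apply: filterS => r Hr; exact: sPA.
Qed.
End Alg.

Section Top.
Variables (R : realType) (m n : nat) (a : 'I_m -> R) (b : 'I_n -> R).
Hypotheses (hsa : \sum_i a i = 1) (hsb : \sum_j b j = 1).
Variables (Y : topologicalType) (act : 'M[R]_(m + n) -> Y -> Y).
Hypothesis hact : continuous_SL_action act.

Lemma phi_cont : continuous (fun pz : R * Y => act (GG _ _ _ a b pz.1) pz.2).
Proof.
case: hact => _ _ hc.
have hw := proj1 (subspace_continuousP _ _) hc.
move=> [r z].
have SLh : SL (GG _ _ _ a b r, z).1 by rewrite /SL /= (detGG _ _ _ _ _ hsa hsb).
have := hw _ SLh.
move=> Hw W /= HW.
have := Hw W HW.
rewrite /within /= => HV.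
have hh : (fun pz : R * Y => (GG _ _ _ a b pz.1, pz.2)) @ nbhs (r, z) --> (GG _ _ _ a b r, z).
  apply: (@cvg_pair _ _ _ (nbhs (r, z)) (nbhs (GG _ _ _ a b r)) (nbhs z)) => /=.
    exact: (cvg_comp _ _ (@cvg_fst _ _ (nbhs r) (nbhs z) _) (GG_cont _ _ _ a b r)).
  exact: (@cvg_snd _ _ (nbhs r) (nbhs z) _).
have H2 := hh _ HV.
apply: (@filterS _ (nbhs (r, z)) _ _ _ _ H2) => pz /= H; apply: H; by rewrite /SL /= (detGG _ _ _ _ _ hsa hsb).
Qed.
End Top.

Lemma le_integral_nm d (T : measurableType d) (R : realType)
  (mu : {measure set T -> \bar R}) (D : set T) (f g : T -> \bar R) :
  (forall x, D x -> (0 <= f x)%E) -> (forall x, D x -> (f x <= g x)%E) ->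
  (\int[mu]_(x in D) f x <= \int[mu]_(x in D) g x)%E.
Proof.
move=> f0 fg.
have g0 : forall x, D x -> (0 <= g x)%E by move=> x Dx; exact: le_trans (f0 x Dx) (fg x Dx).
rewrite (ge0_integralE _ f0) (ge0_integralE _ g0).
apply: ge_ereal_sup => _ [h Hh <-]; apply: ereal_sup_ubound; exists h => // x.
apply: le_trans (Hh x) _; rewrite /patch; case: ifP => // /[!inE] Dx; exact: fg.
Qed.

Lemma liminf_ev (R : realType) (f : R -> \bar R) (p e : R) : 0 < e ->
  (p%:E <= limf_einf f (pinfty_nbhs R))%E ->
  exists T0, forall T, T0 < T -> ((p - e)%:E <= f T)%E.
Proof.
move=> e0; rewrite limf_einfE => H.
have : ((p - e)%:E < ereal_sup [set ereal_inf (f @` V) | V in pinfty_nbhs R])%E.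
  by apply: lt_le_trans H; rewrite lte_fin ltrBlDr ltrDl.
case/ereal_sup_gt => _ [V [M [_ HM]] <-] lt.
exists M => T hT; apply: le_trans (ltW lt) _; apply: ereal_inf_lbound.
by exists T => //; exact: HM.
Qed.

Lemma GG_shift (R : realType) m n (a : 'I_m -> R) (b : 'I_n -> R) (s u : R) :
  GG R m n a b (s - u) *m GG R m n a b u = GG R m n a b s.
Proof. by rewrite -GGD subrK. Qed.

Lemma GG_shift_u (R : realType) m n (a : 'I_m -> R) (b : 'I_n -> R) (s u : R) (x : 'M[R]_(m, n)) :
  GG R m n a b (s - u) *m (GG R m n a b u *m umat x) = GG R m n a b s *m umat x.
Proof.
exact: (etrans (mulmxA (GG R m n a b (s - u)) (GG R m n a b u) (umat x))
  (congr1 (mulmx^~ (umat x)) (GG_shift R m n a b s u))).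
Qed.

Theorem lemma6p3 (R : realType) (m n : nat)
  (a : 'I_m -> R) (b : 'I_n -> R)
  (ha : forall i, 0 < a i) (hb : forall j, 0 < b j)
  (hsa : \sum_i a i = 1) (hsb : \sum_j b j = 1)
  (Y : pseudoPMetricType R) (hY : hausdorff_space Y)
  (hlc : locally_compact [set: Y]) (hsc : @second_countable Y)
  (act : 'M[R]_(m + n) -> Y -> Y) (hact : continuous_SL_action act)
  (Y' : set Y) (hY'cl : closed Y')
  (hY'inv : forall g z, SL g -> Y' z -> Y' (act g z))
  (p q : R) (hq : 0 < q) (hqp : q < p) (hp : p <= 1)
  (y : Y) (hy : ~ Y' y) (x : 'M[R]_(m, n))
  (hx : Div a b act Y' y p x) :
  forall K : set Y, compact K -> K `<=` ~` Y' ->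
  forall t : R, 1 < t ->
  exists N : nat, forall M : nat, (N < M)%N ->
    q <= M%:R^-1 * \sum_(1 <= l < M.+1)
           \1_(~` K) (act (gdiag a b t ^+ l *m umat x) y).
Proof.
move=> K cK KY' t t1.
have t0 : 0 < t by exact: lt_trans ltr01 t1.
set c := ln t.
have c0 : 0 < c by rewrite /c ln_gt0.
have hGt : gdiag a b t = GG R m n a b c by rewrite gdiagE.
rewrite hGt.
clearbody c.
set G := GG R m n a b.
have SLG s : SL (G s) by rewrite /SL /G /= detGG.
have [hact1 hact2 _] := hact.
have actGG s1 s2 z : act (G s1) (act (G s2) z) = act (G (s1 + s2)) z.
  by rewrite /G GGD hact2 //; exact: SLG.
pose K2 := (fun pz : R * Y => act (G pz.1) pz.2) @` (`[0, c]%classic `*` K).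
have cK2 : compact K2.
  apply: continuous_compact.
    apply: continuous_subspaceT; exact: phi_cont.
  by apply: compact_setX; [exact: segment_compact | exact: cK].
have K2Y' : K2 `<=` ~` Y'.
  move=> _ [[r z] [_ Kz] <-] /= Y'z; apply: (KY' z Kz).
  have := hY'inv (G (- r)) _ (SLG _) Y'z.
  by rewrite actGG addNr /G GG0 hact1.
have hD := hx K2 cK2 K2Y'.
pose eps := (p - q) / 2.
have eps0 : 0 < eps by rewrite /eps divr_gt0 // subr_gt0.
have [T0 HT0] := @liminf_ev R _ _ _ eps0 hD.
pose x1 := Num.max 0 T0 / c.
pose x2 := eps^-1.
have x10 : 0 <= x1 by rewrite /x1 divr_ge0 ?le_max ?lexx // ltW.
have x20 : 0 <= x2 by rewrite /x2 invr_ge0 ltW.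
exists (Num.truncn x1 + Num.truncn x2)%N => M hM.
have hM1 : x1 < M%:R.
  have := truncn_itv x10 => /andP[_ h]; apply: lt_le_trans h _.
  by rewrite ler_nat; apply: leq_trans hM; rewrite ltnS leq_addr.
have hM2 : x2 < M%:R.
  have := truncn_itv x20 => /andP[_ h]; apply: lt_le_trans h _.
  by rewrite ler_nat; apply: leq_trans hM; rewrite ltnS leq_addl.
have M0 : 0 < M%:R :> R by apply: le_lt_trans hM2.
pose T := M%:R * c.
have hT : T0 < T.
  have h0 : T0 <= Num.max 0 T0 by rewrite le_max lexx orbT.
  apply: le_lt_trans h0 _.
  by rewrite /T -ltr_pdivrMr.
have H1 := HT0 T hT.
pose z k := act (G c ^+ k *m umat x) y.
pose F k := if pselect (K (z k)) then set0 else `[k%:R * c, k.+1%:R * c]%classic.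
pose U := \big[setU/set0]_(k < M.+1) F k.
have mF k : measurable (F k).
  by rewrite /F; case: pselect => ? /=; [exact: measurable0 | exact: measurable_itv].
have mU : measurable U.
  by rewrite /U; apply: bigsetU_measurable.
pose D := [set s : R | (0 <= s <= T)%R].
have mD : measurable D by rewrite /D -set_itvcc; exact: measurable_itv.
have detU : \det (umat x) = 1 by rewrite /umat det_ublock !det1 mulr1.
have key : forall s, D s -> ~ K2 (act (G s *m umat x) y) -> U s.
  move=> s /andP[s0 sT] nK2.
  have sc0 : 0 <= s / c by rewrite divr_ge0 // ltW.
  move: (Num.truncn (s / c)) (truncn_itv sc0) => k /andP[hk1 hk2].
  rewrite ler_pdivlMr // in hk1.
  rewrite ltr_pdivrMr // in hk2.
  rewrite /U -bigcup_mkord; exists k.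
    rewrite /= ltnS -(ler_nat R); rewrite -(ler_pM2r c0).
    by apply: le_trans hk1 _.
  rewrite /F; case: pselect => Kz; last by rewrite /= in_itv /= hk1 ltW.
  exfalso; apply: nK2.
  have eG : G c ^+ k = G (k%:R * c) by exact: GGX.
  have SLh : SL (G (k%:R * c) *m umat x).
    change (\det (G (k%:R * c) *m umat x) = 1); rewrite det_mulmx detU mulr1; exact: SLG.
  exists (s - k%:R * c, z k); last first.
    change (act (G (s - k%:R * c)) (act (G c ^+ k *m umat x) y) = act (G s *m umat x) y).
    rewrite eG -(hact2 _ _ _ (SLG _) SLh).
    exact: (congr1 (act^~ y) (GG_shift_u R m n a b s (k%:R * c) x)).
  split; last exact: Kz.
  change (s - k%:R * c \in `[0, c]); rewrite in_itv /= subr_ge0 hk1 /=.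
  rewrite lerBlDr; apply: ltW; apply: (lt_le_trans hk2).
  by rewrite mulrSr mulrDl mul1r addrC.
have Hint : (\int[lebesgue_measure]_(s in D)
     (\1_[set s0 | ~ K2 (act (gdiag a b (expR s0) *m umat x) y)] s)%:E
   <= \int[lebesgue_measure]_(s in D) (\1_U s)%:E)%E.
  apply: le_integral_nm => s Ds; first by rewrite lee_fin indicE ler0n.
  rewrite lee_fin !indicE.
  have [h|h] := pselect (~ K2 (act (G s *m umat x) y)).
    by rewrite (mem_set (key s Ds h)) ler_nat leq_b1.
  by rewrite memNset //= ler0n.
rewrite (@integral_indic _ _ _ lebesgue_measure D mD U mU) in Hint.
have Hsub : (lebesgue_measure (U `&` D) <= \sum_(k < M.+1) lebesgue_measure (F k))%E.
  apply: (@content_subadditive _ R _ lebesgue_measure).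
  - by move=> k _; exact: mF.
  - exact: measurableI.
  - by move=> s [].
have HF k : lebesgue_measure (F k) = (\1_(~` K) (z k) * c)%:E.
  rewrite /F indicE; case: pselect => h /=.
    by rewrite measure0 in_setC (mem_set h) mul0r.
  rewrite lebesgue_measure_itv /= lte_fin ltr_pM2r // ltr_nat ltnSn.
  rewrite in_setC memNset // mul1r -EFinB; congr (_%:E).
  by rewrite mulrSr mulrDl mul1r addrAC subrr add0r.
have Hs : (\sum_(k < M.+1) lebesgue_measure (F k) =
    ((\sum_(k < M.+1) \1_(~` K) (z k)) * c)%:E)%E.
  under eq_bigr => k _ do rewrite HF.
  by rewrite sumEFin mulr_suml.
rewrite Hs in Hsub.
have H2 := le_trans Hint Hsub.
have H3 : ((p - eps)%:E <= (T^-1)%:E * ((\sum_(i < M.+1) \1_(~` K) (z i)) * c)%:E)%E.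
  apply: le_trans H1 _; apply: lee_wpmul2l; first by rewrite lee_fin invr_ge0 /T ltW // mulr_gt0.
  exact: H2.
rewrite -EFinM lee_fin in H3.
rewrite -(big_mkord xpredT (fun i => \1_(~` K) (z i))) big_ltn // in H3.
change (q <= M%:R^-1 * \sum_(1 <= l < M.+1) \1_(~` K) (z l)).
move: H3; set cnt := \sum_(1 <= l < M.+1) \1_(~` K) (z l) => H3.
have i01 : (\1_(~` K) (z 0) : R) <= 1 by rewrite indicE lern1 leq_b1.
have eA : T^-1 * ((\1_(~` K) (z 0) + cnt) * c) = (\1_(~` K) (z 0) + cnt) / M%:R.
  rewrite /T invfM -mulrA [c^-1 * _]mulrC -mulrA mulfV ?gt_eqF // mulr1 mulrC //.
rewrite eA ler_pdivlMr // in H3.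
have E : 1 < eps * M%:R.
  have h : eps * eps^-1 < eps * M%:R by rewrite ltr_pM2l.
  by rewrite mulfV ?gt_eqF in h.
have peps : p - eps = q + eps by rewrite /eps; lra.
rewrite peps in H3.
rewrite mulrC ler_pdivlMr //.
nra.
Qed.
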